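(* The abelian group $\ell^\infty(\mathbb{Z})_S$ is torsion-free: if $a,c\in\ell^\infty(\mathbb{Z})$ and $n\ge1$ satisfy $na=c-Sc$, then $a=c'-Sc'$ for some $c'\in\ell^\infty(\mathbb{Z})$.
   Context: $\ell^\infty(\mathbb{Z})$ denotes the abelian group of bounded integer-valued sequences $(a_j)_{j\in\mathbb{Z}}$, $S(a_j)_j=(a_{j+1})_j$ is the shift, and $\ell^\infty(\mathbb{Z})_S=\ell^\infty(\mathbb{Z})/\{a-Sa: a\in\ell^\infty(\mathbb{Z})\}$. *)

(* Defs.v *)
From Stdlib Require Import ZArith.
Open Scope Z_scope.

Definition bounded_seq (a : Z -> Z) : Prop :=
  exists M : Z, forall j : Z, Z.abs (a j) <= M.

Definition seq_shift (a : Z -> Z) : Z -> Z := fun j => a (j + 1).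

(* Main.v *)
Require Import Defs.
From Stdlib Require Import ZArith Lia.
Open Scope Z_scope.

Lemma abs_div_le (x n : Z) : 1 <= n -> Z.abs (x / n) <= Z.abs x.
Proof.
  intros Hn.
  pose proof (Z.div_mod x n ltac:(lia)) as Hd.
  pose proof (Z.mod_pos_bound x n ltac:(lia)) as Hb.
  remember (x / n) as q; remember (x mod n) as r.
  destruct (Z.abs_spec q) as [[? ->]|[? ->]]; destruct (Z.abs_spec x) as [[? ->]|[? ->]]; nia.
Qed.

Theorem lemma5p2 (a c : Z -> Z) (n : Z) :
  bounded_seq a -> bounded_seq c -> 1 <= n ->
  (forall j : Z, n * a j = c j - seq_shift c j) ->
  exists c' : Z -> Z, bounded_seq c' /\ (forall j : Z, a j = c' j - seq_shift c' j).
Proof.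
  intros _ [M HM] Hn H.
  unfold seq_shift in *.
  assert (Hstep : forall j, c (j + 1) mod n = c j mod n).
  { intros j. replace (c (j + 1)) with (c j + (- a j) * n) by (specialize (H j); lia).
    apply Z.mod_add; lia. }
  assert (Hall : forall j, c j mod n = c 0 mod n).
  { intros j. induction j using Z.peano_ind.
    - reflexivity.
    - rewrite <- Z.add_1_r, Hstep; exact IHj.
    - rewrite <- IHj. rewrite <- (Hstep (Z.pred j)). f_equal. f_equal. lia. }
  exists (fun j => c j / n). split.
  - exists M. intros j. eapply Z.le_trans; [apply abs_div_le; lia| apply HM].
  - intros j. simpl.
    pose proof (Z.div_mod (c j) n ltac:(lia)).
    pose proof (Z.div_mod (c (j+1)) n ltac:(lia)).
    pose proof (Hall j). pose proof (Hall (j+1)). specialize (H j).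
    nia.
Qed.
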